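(* Consider a Fragile multi-CPR Game with $n\ge1$ players and $m=1$ CPR satisfying the Assumption below, with constraint policies $\vartheta_i$ as defined below. Then the game admits a unique Generalized Nash equilibrium.
   Context: Let $n,m\ge1$ be integers and $[k]=\{1,\dots,k\}$. Let $C_m=\{(x_1,\dots,x_m)\in[0,1]^m:\sum_{j\in[m]}x_j\le1\}$, $\mathcal{C}_n=\prod_{i\in[n]}C_m$ and $\mathcal{C}_{-i}=\prod_{[n]\setminus\{i\}}C_m$. A strategy profile is $\mathbf{x}=(\mathbf{x}_1,\dots,\mathbf{x}_n)\in\mathcal{C}_n$, $\mathbf{x}_i=(x_{i1},\dots,x_{im})$; write $\mathbf{x}=(\mathbf{x}_i,\mathbf{x}_{-i})$. Put $\mathbf{x}_T^{(j)}=\sum_{i\in[n]}x_{ij}$ and $\mathbf{x}_T^{j|i}=\sum_{\ell\ne i}x_{\ell j}$. Each CPR $j$ has a return rate $\mathcal{R}_j(t)>1$ and failure probability $p_j(t)\in[0,1]$; each player $i$ has parameters $a_i,k_i$. Effective rate: $\mathcal{F}_{ij}(t)=(\mathcal{R}_j(t)-1)^{a_i}(1-p_j(t))-k_i p_j(t)$; utility: $\mathcal{V}_i(\mathbf{x}_i;\mathbf{x}_{-i})=\sum_{j}x_{ij}^{a_i}\mathcal{F}_{ij}(\mathbf{x}_T^{(j)})$. Assumption: (1) $p_j(0)=0$, $p_j(t)=1$ for $t\ge1$; (2) $a_i\in(0,1]$, $k_i>0$; (3) each $\mathcal{F}_{ij}$ (continuous on $[0,1]$) has strictly negative first and second derivatives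 on $(0,1)$. Let $\omega_{ij}\in(0,1)$ be the unique zero of $\mathcal{F}_{ij}$ in $(0,1)$. Active CPRs: $A(\mathbf{x}_{-i})=\{j:\mathbf{x}_T^{j|i}<\omega_{ij}\}$. Constraint policy: $\vartheta_i(\mathbf{x}_{-i})=C_m\cap\big(\prod_{j\in A(\mathbf{x}_{-i})}[0,\omega_{ij}-\mathbf{x}_T^{j|i}]\times\prod_{j\in[m]\setminus A(\mathbf{x}_{-i})}\{0\}\big)$. A Generalized Nash equilibrium (GNE) is $\mathbf{x}^*\in\mathcal{C}_n$ with, for all $i$, $\mathbf{x}^*_i\in\vartheta_i(\mathbf{x}^*_{-i})$ and $\mathcal{V}_i(\mathbf{x}^*_i;\mathbf{x}^*_{-i})\ge\mathcal{V}_i(\mathbf{y};\mathbf{x}^*_{-i})$ for all $\mathbf{y}\in\vartheta_i(\mathbf{x}^*_{-i})$. *)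

(* Defs.v *)
From HB Require Import structures.
From mathcomp Require Import all_boot all_order all_algebra.
From mathcomp Require Import all_classical all_reals all_analysis.
Set Implicit Arguments. Unset Strict Implicit. Unset Printing Implicit Defensive.
Import Order.TTheory GRing.Theory Num.Theory.
Import numFieldNormedType.Exports.
Local Open Scope classical_set_scope.
Local Open Scope ring_scope.

Section FragileGame.
Variables (R : realType) (n m : nat).
(* Rr j = return rate R_j, p j = failure probability p_j, a i, k i player params *)
Variables (Rr p : 'I_m -> R -> R) (a k : 'I_n -> R).

Definition Feff (i : 'I_n) (j : 'I_m) (t : R) : R :=
  (Rr j t - 1) `^ (a i) * (1 - p j t) - k i * p j t.

Definition inC (y : 'rV[R]_m) : Prop :=
  (forall j, 0 <= y 0 j <= 1) /\ \sum_(j < m) y 0 j <= 1.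

Definition profile (x : 'M[R]_(n, m)) : Prop := forall i, inC (row i x).

Definition others (x : 'M[R]_(n, m)) (i : 'I_n) (j : 'I_m) : R :=
  \sum_(l < n | l != i) x l j.

Definition util (i : 'I_n) (y : 'rV[R]_m) (x : 'M[R]_(n, m)) : R :=
  \sum_(j < m) (y 0 j) `^ (a i) * Feff i j (y 0 j + others x i j).

(* constraint policy theta_i(x_{-i}), given the zeros omega i j of F_ij *)
Definition theta (omega : 'I_n -> 'I_m -> R) (x : 'M[R]_(n, m)) (i : 'I_n)
  (y : 'rV[R]_m) : Prop :=
  inC y /\
  forall j, (others x i j < omega i j -> 0 <= y 0 j <= omega i j - others x i j)
         /\ (~ (others x i j < omega i j) -> y 0 j = 0).

Definition GNE (omega : 'I_n -> 'I_m -> R) (x : 'M[R]_(n, m)) : Prop :=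
  profile x /\
  forall i, theta omega x i (row i x) /\
    forall y, theta omega x i y -> util i y x <= util i (row i x) x.

End FragileGame.

(* Main.v *)
Require Import Defs.
From HB Require Import structures.
From mathcomp Require Import all_boot all_order all_algebra.
From mathcomp Require Import all_classical all_reals all_analysis.
From mathcomp Require Import lra ring.
Import Order.TTheory GRing.Theory Num.Theory.
Import numFieldNormedType.Exports.
Local Open Scope classical_set_scope.
Local Open Scope ring_scope.

Definition Fgood (R : realType) (F : R -> R) :=
  {within `[0, 1]%classic, continuous F} /\
  (forall t, 0 < t < 1 ->
     derivable F t 1 /\ (derive1 F) t < 0 /\
     derivable (derive1 F) t 1 /\ derive1 (derive1 F) t < 0).

Arguments Fgood {R}.

Lemma Fdec {R : realType} {F : R -> R} : Fgood F ->
  forall x y, 0 <= x -> y <= 1 -> x < y -> F y < F x.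
Proof.
case=> c d x y x0 y1 xy.
have := @ltr0_derive1_lt_cc R F 0 1.
apply.
- by move=> t; rewrite in_itv /= => /d [].
- by move=> t; rewrite in_itv /= => /d [_ []].
- exact: c.
- rewrite in_itv /=; apply/andP; split; lra.
- rewrite in_itv /=; apply/andP; split; lra.
- exact: xy.
Qed.

Lemma Fcont_at {R : realType} {F : R -> R} t : Fgood F -> 0 < t < 1 ->
  {for t, continuous F}.
Proof.
by case=> _ d /d [h _]; apply/differentiable_continuous/derivable1_diffP.
Qed.

Lemma Dcont_at {R : realType} {F : R -> R} t : Fgood F -> 0 < t < 1 ->
  {for t, continuous (derive1 F)}.
Proof.
by case=> _ d /d [_ [_ [h _]]]; apply/differentiable_continuous/derivable1_diffP.
Qed.

Lemma Ddec {R : realType} {F : R -> R} : Fgood F ->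
  forall x y, 0 < x -> y < 1 -> x < y -> derive1 F y < derive1 F x.
Proof.
move=> G x y x0 y1 xy.
have := @ltr0_derive1_lt_oo R (derive1 F) 0 1.
case: G => c d.
apply.
- by move=> t; rewrite in_itv /= => /d [_ [_ []]].
- by move=> t; rewrite in_itv /= => /d [_ [_ [_ ]]].
- move=> t; rewrite inE /= in_itv /= => tI; exact: (Dcont_at _ (conj c d) tI).
- rewrite in_itv /=; apply/andP; split; lra.
- rewrite in_itv /=; apply/andP; split; lra.
- exact: xy.
Qed.

Lemma Fderiv {R : realType} {F : R -> R} (t : R) : Fgood F -> 0 < t < 1 ->
  is_derive t 1 F (derive1 F t).
Proof. by case=> _ d /d [h _]; rewrite derive1E; apply: derivableP. Qed.

Lemma Fcont_sub {R : realType} {F : R -> R} (u v : R) : Fgood F ->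
  0 <= u -> v <= 1 -> {within `[u, v]%classic, continuous F}.
Proof.
case=> c _ u0 v1; apply: continuous_subspaceW c => x /=; rewrite !in_itv /=.
move=> /andP[ux xv]; apply/andP; split; lra.
Qed.

Lemma tangent {R : realType} {F : R -> R} (t0 t : R) : Fgood F -> 0 < t0 < 1 ->
  0 <= t <= 1 -> F t <= F t0 + derive1 F t0 * (t - t0).
Proof.
move=> G /andP[t00 t01] /andP[tge0 tle1].
case: (ltgtP t t0) => [tt0|t0t|->]; last by rewrite subrr mulr0 addr0.
- have dI : forall x, x \in `]t, t0[ -> is_derive x 1 F (derive1 F x).
    move=> x; rewrite in_itv /= => /andP[? ?]; apply: Fderiv G _.
    apply/andP; split; lra.
  have [c cI Hc] := @MVT R F (derive1 F) t t0 tt0 dI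
    (Fcont_sub _ _ G tge0 (ltW t01)).
  move: cI; rewrite in_itv /= => /andP[tc ct0].
  have Dc : derive1 F t0 < derive1 F c.
    by apply: (Ddec G) => //; apply: le_lt_trans tc.
  have : derive1 F t0 * (t0 - t) <= derive1 F c * (t0 - t).
    by rewrite ler_pM2r ?subr_gt0 // ltW.
  rewrite -Hc; nra.
- have dI : forall x, x \in `]t0, t[ -> is_derive x 1 F (derive1 F x).
    move=> x; rewrite in_itv /= => /andP[? ?]; apply: Fderiv G _.
    apply/andP; split; lra.
  have [c cI Hc] := @MVT R F (derive1 F) t0 t t0t dI
    (Fcont_sub _ _ G (ltW t00) tle1).
  move: cI; rewrite in_itv /= => /andP[tc ct0].
  have Dc : derive1 F c < derive1 F t0.
    by apply: (Ddec G) => //; apply: lt_le_trans tle1.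
  have : derive1 F c * (t - t0) <= derive1 F t0 * (t - t0).
    by rewrite ler_pM2r ?subr_gt0 // ltW.
  nra.
Qed.

Lemma bern {R : realType} (z al : R) : 0 <= z -> 0 < al <= 1 ->
  z `^ al <= 1 + al * (z - 1).
Proof.
move=> z0 /andP[al0 al1].
case: (ltgtP al 1) => [alt1|//|->]; last first.
  by rewrite powRr1 // mul1r addrC subrK.
  by move: al1; rewrite leNgt => /negP.
have q0 : 0 < (1 - al)^-1 by rewrite invr_gt0 subr_gt0.
have p0 : 0 < al^-1 by rewrite invr_gt0.
have pq : al^-1^-1 + (1 - al)^-1^-1 = 1 by rewrite !invrK addrC subrK.
have := @conjugate_powR R (z `^ al) 1 (al^-1) ((1 - al)^-1) (powR_ge0 _ _) ler01 p0 q0 pq.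
rewrite -powRrM mulfV ?gt_eqF // powRr1 // powR1 mulr1 !invrK.
move=> H; apply: (le_trans H); lra.
Qed.

Lemma suffBR {R : realType} {F : R -> R} (al s x z : R) : Fgood F ->
  0 < al <= 1 -> 0 <= s -> 0 < x -> x + s < 1 ->
  al * F (x + s) + x * derive1 F (x + s) = 0 ->
  0 <= z -> z + s <= 1 -> 0 <= F (z + s) ->
  z `^ al * F (z + s) <= x `^ al * F (x + s).
Proof.
move=> G /andP[al0 al1] s0 x0 xs1 foc z0 zs1 Fz0.
have t0I : 0 < x + s < 1 by apply/andP; split; lra.
have D0 : derive1 F (x + s) < 0 by case: G => _ d; case: (d _ t0I) => _ [].
have F0 : 0 < F (x + s) by nra.
have tg := tangent _ (z + s) G t0I.
have {tg} tg : F (z + s) <= F (x + s) + derive1 F (x + s) * (z - x).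
  have := tg (ltac:(apply/andP; split; lra)).
  by have -> : z + s - (x + s) = z - x by ring.
set u := z / x - 1.
have zx : z - x = x * u by rewrite /u mulrBr mulrCA divff ?gt_eqF // mulr1 mulr1.
have hB : F (z + s) <= F (x + s) * (1 - al * u).
  move: tg; rewrite zx; nra.
have hz : z = x * (z / x) by rewrite mulrCA divff ?gt_eqF // mulr1.
have zx0 : 0 <= z / x by rewrite divr_ge0 // ltW.
have hq := bern (z / x) al zx0 (ltac:(apply/andP; split => //)).
rewrite [in X in X `^ _]hz powRM ?(ltW x0) //.
have P0 : 0 < x `^ al by apply: powR_gt0.
have q0 : 0 <= (z / x) `^ al := powR_ge0 _ _.
fold u in hq.
rewrite -mulrA ler_pM2l //.
have h1 : (z / x) `^ al * F (z + s) <= (1 + al * u) * F (z + s).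
  by apply: ler_wpM2r.
have h2 : (1 + al * u) * F (z + s) <= (1 + al * u) * (F (x + s) * (1 - al * u)).
  apply: ler_wpM2l => //; exact: le_trans q0 hq.
have h3 : 0 <= F (x + s) * (al * u) ^+ 2 by apply: mulr_ge0; [exact: ltW|exact: sqr_ge0].
apply: (le_trans h1); apply: (le_trans h2).
have -> : (1 + al * u) * (F (x + s) * (1 - al * u)) = F (x + s) - F (x + s) * (al * u) ^+ 2 by ring.
lra.
Qed.

Lemma gderiv {R : realType} {F : R -> R} (al s y : R) : Fgood F ->
  0 < y -> 0 < y + s < 1 ->
  is_derive y 1 ((@powR R ^~ al) * (fun z => F (z + s)))%R
    (y `^ al * (derive1 F (y + s) * (1 + 0)) + F (y + s) * (al * y `^ (al - 1))).
Proof.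
move=> G y0 ysI.
apply: is_deriveM; first exact: is_derive1_powR.
have h1 : is_derive y 1 (fun z => z + s) (1 + 0).
  exact: (is_deriveD (is_derive_id y 1) (is_derive_cst s y 1)).
have h2 := Fderiv _ G ysI.
have h3 := @is_derive1_comp R F (fun z => z + s) y _ _ h2 h1.
exact: h3.
Qed.

Lemma necBR {R : realType} {F : R -> R} (al s om y : R) : Fgood F ->
  0 < al <= 1 -> 0 <= s -> s < om -> om < 1 -> F om = 0 -> 0 <= y <= om - s ->
  (forall z, 0 <= z <= om - s -> z `^ al * F (z + s) <= y `^ al * F (y + s)) ->
  0 < y /\ y + s < om /\ al * F (y + s) + y * derive1 F (y + s) = 0.
Proof.
move=> G /andP[al0 al1] s0 som om1 Fom /andP[y0 yw] ymax.
set w := om - s.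
have wE : w = om - s by [].
have w0 : 0 < w by lra.
have gpos : 0 < y `^ al * F (y + s).
  have z0I : 0 <= w / 2 <= w by apply/andP; split; lra.
  apply: (lt_le_trans _ (ymax _ z0I)).
  apply: mulr_gt0; first by apply: powR_gt0; lra.
  rewrite -Fom; apply: (Fdec G); lra.
have yn0 : y != 0.
  apply/eqP => y0'; move: gpos; rewrite y0' powR0 ?gt_eqF // mul0r ltxx.
  by [].
have ynw : y != w.
  apply/eqP => yw'; move: gpos; rewrite yw' wE subrK Fom mulr0 ltxx.
  by [].
have ypos : 0 < y by rewrite lt_def yn0 y0.
have ylt : y < w by rewrite lt_def eq_sym ynw yw.
have ysI : 0 < y + s < 1 by apply/andP; split; lra.
have H0 : is_derive y 1 ((@powR R ^~ al) * (fun z => F (z + s)))%R 0.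
  apply: (@derive1_at_max R _ 0 w y (ltW w0)).
  - move=> t; rewrite in_itv /= => /andP[t0 tw].
    apply: ex_derive; apply: (gderiv al s t G t0).
    by apply/andP; split; lra.
  - by rewrite in_itv /= ypos ylt.
  - move=> t; rewrite in_itv /= => /andP[t0 tw].
    by apply: ymax; apply/andP; split; lra.
have H1 := gderiv al s y G ypos ysI.
have E := etrans (esym (@derive_val _ _ _ _ _ _ _ H0)) (@derive_val _ _ _ _ _ _ _ H1).
have P0 : 0 < y `^ al by apply: powR_gt0.
have yy : y * y `^ (al - 1) = y `^ al by apply: mulr_powRB1 => //; exact: ltW.
have E2 : y `^ al * (al * F (y + s) + y * derive1 F (y + s)) = 0.
  have := congr1 (fun r => y * r) E; rewrite mulr0 => E'.
  rewrite [RHS]E' addr0 mulr1 -yy; ring.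
split => //; split; first by lra.
by move: E2 => /eqP; rewrite mulf_eq0 gt_eqF //= => /eqP.
Qed.

Definition hf {R : realType} (al : R) (F : R -> R) (T : R) : R :=
  Order.max 0 (al * F T / - derive1 F T).

Lemma hf_ge0 {R : realType} (al : R) F T : 0 <= hf al F T.
Proof. by rewrite /hf le_max lexx. Qed.

Lemma Dneg {R : realType} {F : R -> R} (T : R) : Fgood F -> 0 < T < 1 ->
  derive1 F T < 0.
Proof. by case=> _ d /d [_ []]. Qed.

Lemma hf_pos {R : realType} {F : R -> R} (al T : R) : Fgood F -> 0 < al ->
  0 < T < 1 -> 0 < F T -> hf al F T = al * F T / - derive1 F T.
Proof.
move=> G al0 TI FT; have D := Dneg _ G TI.
rewrite /hf max_r //; apply: divr_ge0; [apply: mulr_ge0|]; lra.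
Qed.

Lemma hf_zero {R : realType} {F : R -> R} (al T : R) : Fgood F -> 0 < al ->
  0 < T < 1 -> F T <= 0 -> hf al F T = 0.
Proof.
move=> G al0 TI FT; have D := Dneg _ G TI.
rewrite /hf max_l //; rewrite mulrC pmulr_rle0 ?invr_gt0; last by lra.
by apply: mulr_ge0_le0; [exact: ltW|].
Qed.

Lemma hf_foc {R : realType} {F : R -> R} (al T : R) : Fgood F -> 0 < al ->
  0 < T < 1 -> 0 < F T -> al * F T + hf al F T * derive1 F T = 0.
Proof.
move=> G al0 TI FT; have D := Dneg _ G TI.
rewrite hf_pos //; field; rewrite ?oppr_eq0 lt_eqF //.
Qed.

Lemma foc_hf {R : realType} {F : R -> R} (al T y : R) : Fgood F -> 0 < al ->
  0 < T < 1 -> 0 < F T -> al * F T + y * derive1 F T = 0 -> y = hf al F T.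
Proof.
move=> G al0 TI FT E; have D := Dneg _ G TI.
rewrite hf_pos //.
have DN : derive1 F T != 0 by rewrite lt_eqF.
have -> : al * F T = - (y * derive1 F T) by lra.
by field.
Qed.

Lemma hf_noninc {R : realType} {F : R -> R} (al T1 T2 : R) : Fgood F -> 0 < al ->
  0 < T1 -> T1 <= T2 -> T2 < 1 -> hf al F T2 <= hf al F T1.
Proof.
move=> G al0 T10 T12 T21.
have T1I : 0 < T1 < 1 by apply/andP; split; lra.
have T2I : 0 < T2 < 1 by apply/andP; split; lra.
case: (leP (F T2) 0) => F2.
  by rewrite (hf_zero _ _ G) // hf_ge0.
have F12 : F T2 <= F T1.
  case: (ltgtP T1 T2) T12 => // [lt _|-> _]; last by [].
  by apply/ltW/(Fdec G) => //; lra.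
have D12 : derive1 F T2 <= derive1 F T1.
  case: (ltgtP T1 T2) T12 => // [lt _|-> _]; last by [].
  by apply/ltW/(Ddec G).
have D1 := Dneg _ G T1I; have D2 := Dneg _ G T2I.
rewrite !(hf_pos _ _ G) //; last by lra.
rewrite ler_pdivrMr; last by lra.
rewrite mulrAC ler_pdivlMr; last by lra.
have h1 : F T2 * - derive1 F T1 <= F T1 * - derive1 F T1.
  by apply: ler_wpM2r; lra.
have h2 : F T1 * - derive1 F T1 <= F T1 * - derive1 F T2.
  by apply: ler_wpM2l; lra.
rewrite -!mulrA ler_pM2l //; lra.
Qed.

Lemma hf_cont {R : realType} {F : R -> R} (al T : R) : Fgood F -> 0 < T < 1 ->
  {for T, continuous (hf al F)}.
Proof.
move=> G TI; have D := Dneg _ G TI.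
apply: (@continuous_max _ _ (fun=> 0) (fun t => al * F t / - derive1 F t)).
  exact: cst_continuous.
apply: continuousM; first apply: continuousM.
- exact: cst_continuous.
- exact: Fcont_at _ G TI.
- apply: continuousV; first by rewrite oppr_eq0 lt_eqF.
  apply: continuousN; exact: Dcont_at _ G TI.
Qed.

Lemma Fpos_iff {R : realType} {F : R -> R} (om T : R) : Fgood F -> 0 < om < 1 ->
  F om = 0 -> 0 <= T <= 1 -> (0 < F T) = (T < om).
Proof.
move=> G /andP[om0 om1] Fom /andP[T0 T1].
case: (ltgtP T om) => [lt|gt|->]; last by rewrite Fom ltxx.
- by rewrite -Fom; apply: (Fdec G) => //; lra.
- apply/negbTE; rewrite -leNgt -Fom; apply/ltW/(Fdec G) => //; lra.
Qed.

Lemma sum_cont {R : realType} (I : finType) (f : I -> R -> R) (T : R) :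
  (forall i, {for T, continuous (f i)}) ->
  {for T, continuous (fun t => \sum_i f i t)}.
Proof.
move=> fc; rewrite -fct_sumE.
apply: (big_ind (fun g : R -> R => {for T, continuous g})) => //.
- exact: cst_continuous.
- by move=> g1 g2 c1 c2; apply: continuousD.
Qed.

Lemma fix_unique {R : realType} n (F : 'I_n -> R -> R) (al : 'I_n -> R) (T1 T2 : R) :
  (forall i, Fgood (F i)) -> (forall i, 0 < al i) ->
  0 < T1 < 1 -> 0 < T2 < 1 ->
  T1 = \sum_i hf (al i) (F i) T1 -> T2 = \sum_i hf (al i) (F i) T2 -> T1 = T2.
Proof.
move=> G al0.
wlog lt : T1 T2 / T1 <= T2.
  move=> W I1 I2 E1 E2; case: (leP T1 T2) => h; first exact: W.
  by apply/esym/W => //; apply: ltW.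
move=> /andP[a1 b1] /andP[a2 b2] E1 E2.
have : \sum_i hf (al i) (F i) T2 <= \sum_i hf (al i) (F i) T1.
  by apply: ler_sum => i _; apply: hf_noninc.
rewrite -E1 -E2 => h; lra.
Qed.

Lemma fix_exists {R : realType} n (F : 'I_n -> R -> R) (al om : 'I_n -> R) :
  (0 < n)%N -> (forall i, Fgood (F i)) -> (forall i, 0 < al i) ->
  (forall i, 0 < om i < 1) -> (forall i, F i (om i) = 0) ->
  exists T, 0 < T < 1 /\ T = \sum_i hf (al i) (F i) T.
Proof.
move=> n0 G al0 omI Fom.
pose i0 : 'I_n := Ordinal n0.
pose H := fun T => \sum_i hf (al i) (F i) T.
have /andP[oz ou] := omI i0.
set w := om i0 / 2.
have wI : 0 < w < 1 by apply/andP; split; rewrite /w; lra.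
have Fw : 0 < F i0 w.
  by rewrite (Fpos_iff _ _ (G i0) (omI i0) (Fom i0)) /w; [lra|apply/andP; split; rewrite /w; lra].
set c := hf (al i0) (F i0) w.
have c0 : 0 < c by rewrite /c (hf_pos _ _ (G i0)) //; apply: divr_gt0; [apply: mulr_gt0|have := Dneg _ (G i0) wI; lra].
set e := Order.min w c.
have e0 : 0 < e by rewrite /e lt_min; apply/andP; split => //; case/andP: wI.
have ew : e <= w by rewrite /e ge_min lexx.
have ec : e <= c by rewrite /e ge_min lexx orbT.
set M := \big[Order.max/0]_i om i.
have M1 : M < 1 by apply: bigmax_lt => // i _; case/andP: (omI i).
have omM : forall i, om i <= M by move=> i; apply: le_bigmax.
have eM : e <= M by have := omM i0; rewrite /w in ew; lra.
have HM : H M = 0.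
  rewrite /H; apply: big1 => i _; apply: (hf_zero _ _ (G i)) => //.
    by apply/andP; split; [lra|].
  rewrite leNgt (Fpos_iff _ _ (G i) (omI i) (Fom i)); last by apply/andP; split; lra.
  by rewrite -leNgt.
have He : c <= H e.
  rewrite /H (bigD1 i0) //= -[c]addr0; apply: lerD.
    by rewrite /c; apply: hf_noninc => //; lra.
  by apply: sumr_ge0 => i _; apply: hf_ge0.
have cont : {within `[e, M]%classic, continuous (fun T => T - H T)}.
  apply: continuous_in_subspaceT => T; rewrite inE /= in_itv /= => /andP[eT TM].
  have TI : 0 < T < 1 by apply/andP; split; lra.
  apply: (@continuousD _ _ _ (fun t => t) (fun t => - H t) T); first exact: cvg_id.
  apply: continuousN; apply: sum_cont => i; exact: hf_cont.
have [T TI HT] := @IVT R (fun T => T - H T) e M 0 eM cont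
  (ltac:(apply/andP; split; [rewrite ge_min; apply/orP; left; lra|rewrite le_max HM; apply/orP; right; lra])).
move: TI; rewrite in_itv /= => /andP[eT TM].
exists T; split; first by apply/andP; split; lra.
move: HT => /= HT; rewrite /H in HT; lra.
Qed.

Lemma util1 (R : realType) (n : nat) (Rr p : 'I_1 -> R -> R) (a k : 'I_n -> R)
  i (z : 'rV[R]_1) (x : 'M[R]_(n, 1)) :
  util Rr p a k i z x = z 0 0 `^ a i * Feff Rr p a k i 0 (z 0 0 + others x i 0).
Proof. by rewrite /util big_ord1. Qed.

Lemma tot (R : realType) (n : nat) (x : 'M[R]_(n, 1)) i :
  \sum_l x l 0 = x i 0 + others x i 0.
Proof. by rewrite /others (bigD1 i). Qed.

Lemma theta1 (R : realType) (n : nat) (omega : 'I_n -> 'I_1 -> R)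
  (x : 'M[R]_(n, 1)) i (z : 'rV[R]_1) :
  theta omega x i z <->
  (0 <= z 0 0 <= 1) /\
  (others x i 0 < omega i 0 -> 0 <= z 0 0 <= omega i 0 - others x i 0) /\
  (~ others x i 0 < omega i 0 -> z 0 0 = 0).
Proof.
split.
- by case=> [[c _] h]; split; [exact: c|exact: h].
- case=> c h; split; first split.
  + by move=> j; rewrite (ord1 j).
  + by rewrite big_ord1; case/andP: c.
  + by move=> j; rewrite (ord1 j).
Qed.

Lemma Fnonneg {R : realType} {F : R -> R} (om T : R) : Fgood F -> 0 < om < 1 ->
  F om = 0 -> 0 <= T <= om -> 0 <= F T.
Proof.
move=> G omI Fom /andP[T0 Tom].
case: (ltgtP T om) Tom => // [lt _|-> _]; last by rewrite Fom.
have /andP[_ om1] := omI.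
by apply: ltW; rewrite (Fpos_iff _ _ G omI Fom) //; apply/andP; split; lra.
Qed.

Lemma BRnec (R : realType) (n : nat) (Rr p : 'I_1 -> R -> R) (a k : 'I_n -> R)
  (omega : 'I_n -> 'I_1 -> R) (y : 'M[R]_(n, 1)) i :
  Fgood (Feff Rr p a k i 0) -> 0 < a i <= 1 -> 0 < omega i 0 < 1 ->
  Feff Rr p a k i 0 (omega i 0) = 0 -> 0 <= others y i 0 ->
  theta omega y i (row i y) ->
  (forall z, theta omega y i z -> util Rr p a k i z y <= util Rr p a k i (row i y) y) ->
  (others y i 0 < omega i 0 ->
     0 < y i 0 /\ y i 0 + others y i 0 < omega i 0 /\
     a i * Feff Rr p a k i 0 (y i 0 + others y i 0) +
       y i 0 * derive1 (Feff Rr p a k i 0) (y i 0 + others y i 0) = 0) /\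
  (~ others y i 0 < omega i 0 -> y i 0 = 0).
Proof.
move=> G alI omI Fom s0 /theta1 [_ [th1 th2]] ymax.
rewrite mxE in th1 th2.
split; last exact: th2.
move=> som; have /andP[om0 om1] := omI.
apply: (necBR _ _ _ _ G alI s0 som om1 Fom (th1 som)).
move=> z /andP[z0 zw].
have := ymax (const_mx z); rewrite !util1 !mxE; apply.
apply/theta1; rewrite !mxE; split; first by apply/andP; split; lra.
split; first by move=> _; apply/andP; split.
by move=> /(_ som).
Qed.

Arguments util1 {R n}.
Arguments tot {R n}.
Arguments theta1 {R n}.
Arguments BRnec {R n}.

Theorem theorem3 (R : realType) (n : nat) (Rr p : 'I_1 -> R -> R)
  (a k : 'I_n -> R) (omega : 'I_n -> 'I_1 -> R) :
  (0 < n)%N ->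
  (forall j t, 0 <= t -> 1 < Rr j t) ->
  (forall j t, 0 <= t -> 0 <= p j t <= 1) ->
  (forall j, p j 0 = 0) ->
  (forall j t, 1 <= t -> p j t = 1) ->
  (forall i, 0 < a i <= 1) ->
  (forall i, 0 < k i) ->
  (forall i j, {within `[0, 1]%classic, continuous (Feff Rr p a k i j)}) ->
  (forall i j t, 0 < t < 1 ->
     derivable (Feff Rr p a k i j) t 1 /\ (derive1 (Feff Rr p a k i j)) t < 0 /\
     derivable ((derive1 (Feff Rr p a k i j))) t 1 /\
     derive1 (derive1 (Feff Rr p a k i j)) t < 0) ->
  (forall i j, 0 < omega i j < 1 /\ Feff Rr p a k i j (omega i j) = 0) ->
  exists x : 'M[R]_(n, 1),
    GNE Rr p a k omega x /\ forall y, GNE Rr p a k omega y -> y = x.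
Proof.
move=> n0 _ _ _ _ ha _ hc hd hom.
pose F i := Feff Rr p a k i 0.
have G : forall i, Fgood (F i) by move=> i; split; [exact: hc|exact: hd].
have omI : forall i, 0 < omega i 0 < 1 by move=> i; case: (hom i 0).
have Fom : forall i, F i (omega i 0) = 0 by move=> i; case: (hom i 0).
have al0 : forall i, 0 < a i by move=> i; case/andP: (ha i).
have [Ts [TsI Tsfix]] := fix_exists _ F a (fun i => omega i 0) n0 G al0 omI Fom.
have [Ts0 Ts1] : 0 < Ts /\ Ts < 1 by apply/andP.
pose x : 'M[R]_(n, 1) := \matrix_(i, j) hf (a i) (F i) Ts.
have xE : forall i, x i 0 = hf (a i) (F i) Ts by move=> i; rewrite mxE.
have xsum : \sum_l x l 0 = Ts by rewrite Tsfix; apply: eq_bigr => l _; rewrite xE.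
have xs : forall i, others x i 0 = Ts - x i 0.
  by move=> i; rewrite -xsum (tot x i); ring.
have x0 : forall i, 0 <= x i 0 by move=> i; rewrite xE hf_ge0.
have xle : forall i, x i 0 <= Ts.
  move=> i; rewrite -xsum (tot x i) lerDl /others.
  by apply: sumr_ge0 => l _; apply: x0.
have Tsc : 0 <= Ts <= 1 by apply/andP; split; lra.
have key : forall i, (Ts < omega i 0 -> 0 < x i 0 /\
    a i * F i Ts + x i 0 * derive1 (F i) Ts = 0) /\
    (~ Ts < omega i 0 -> x i 0 = 0).
  move=> i; split => h.
  - have FT : 0 < F i Ts by rewrite (Fpos_iff _ _ (G i) (omI i) (Fom i) Tsc).
    rewrite xE; split; last exact: hf_foc.
    rewrite (hf_pos _ _ (G i)) //; apply: divr_gt0; first exact: mulr_gt0.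
    by have := Dneg _ (G i) TsI; lra.
  - rewrite xE; apply: (hf_zero _ _ (G i)) => //.
    by rewrite leNgt (Fpos_iff _ _ (G i) (omI i) (Fom i) Tsc); apply/negP.
have sI : forall i, (others x i 0 < omega i 0) = (Ts < omega i 0).
  move=> i; rewrite xs; apply/idP/idP => h.
  - case: (boolP (Ts < omega i 0)) => // /negP h'.
    by move: h; rewrite ((key i).2 h') subr0 => h; exfalso; apply: h'.
  - have := x0 i; lra.
have thx : forall i, theta omega x i (row i x).
  move=> i; apply/theta1; rewrite mxE; split.
    by apply/andP; split; [exact: x0|have := xle i; lra].
  split.
  - rewrite sI xs => h; apply/andP; split; first exact: x0.
    lra.
  - by rewrite sI => h; apply: (key i).2.
exists x; split.
  split; first by move=> i; case: (thx i).
  move=> i; split; first exact: thx.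
  move=> z /theta1 [zc [zh1 zh2]]; rewrite !util1 mxE.
  case: (boolP (others x i 0 < omega i 0)) => [hs|/negP hs].
  - have hT : Ts < omega i 0 by rewrite -sI.
    have [xp foc] := (key i).1 hT.
    have /andP[zz0 zz1] := zh1 hs.
    have e : x i 0 + others x i 0 = Ts by rewrite xs; ring.
    rewrite e.
    have sge0 : 0 <= others x i 0 by rewrite xs; have := xle i; lra.
    have /andP[om0 om1] := omI i.
    have := suffBR (a i) (others x i 0) (x i 0) (z 0 0) (G i) (ha i) sge0 xp
      (ltac:(rewrite e; lra)) (ltac:(rewrite e; exact: foc)) zz0
      (ltac:(lra)).
    rewrite e; apply.
    apply: (Fnonneg _ _ (G i) (omI i) (Fom i)); apply/andP; split; lra.
  - rewrite (zh2 hs) ((key i).2 _) //; by rewrite -sI.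
move=> y [prof Hy].
have y0 : forall l, 0 <= y l 0.
  by move=> l; case: (prof l) => /(_ 0) + _; rewrite mxE => /andP[].
have s0 : forall i, 0 <= others y i 0.
  by move=> i; apply: sumr_ge0 => l _; apply: y0.
have BR := fun i => BRnec Rr p a k omega y i (G i) (ha i) (omI i) (Fom i) (s0 i)
  (Hy i).1 (Hy i).2.
set T := \sum_l y l 0.
have Ttot : forall i, T = y i 0 + others y i 0 by move=> i; exact: tot.
have [j yj] : exists j, 0 < y j 0.
  case: (pselect (exists j, 0 < y j 0)) => // hne; exfalso.
  pose i0 : 'I_n := Ordinal n0.
  have all0 : forall l, y l 0 = 0.
    move=> l; have := y0 l; rewrite le_eqVlt => /orP[/eqP <- //|h].
    by exfalso; apply: hne; exists l.
  have so : others y i0 0 = 0 by apply: big1 => l _; exact: all0.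
  have /andP[om0 _] := omI i0.
  have := ((BR i0).1 (ltac:(rewrite so; exact: om0))).1.
  by rewrite all0 ltxx.
have TI : 0 < T < 1.
  case: (boolP (others y j 0 < omega j 0)) => [hs|/negP hs].
  - have [_ [ylt _]] := (BR j).1 hs.
    have /andP[_ om1] := omI j.
    have := s0 j; have := Ttot j => h1 h2; apply/andP; split; lra.
  - by have := (BR j).2 hs; move: yj => /[swap] ->; rewrite ltxx.
have Tc : 0 <= T <= 1 by case/andP: TI => ? ?; apply/andP; split; lra.
have yh : forall i, y i 0 = hf (a i) (F i) T.
  move=> i; case: (boolP (others y i 0 < omega i 0)) => [hs|/negP hs].
  - have [yp [ylt foc]] := (BR i).1 hs.
    rewrite -(Ttot i) in ylt foc.
    apply: (foc_hf _ _ _ (G i)) => //.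
    by rewrite (Fpos_iff _ _ (G i) (omI i) (Fom i) Tc).
  - rewrite ((BR i).2 hs); apply/esym/(hf_zero _ _ (G i)) => //.
    rewrite leNgt (Fpos_iff _ _ (G i) (omI i) (Fom i) Tc).
    apply/negP => h.
    by move: h; rewrite (Ttot i) ((BR i).2 hs) add0r => h; exact: hs h.
have Tfix : T = \sum_i hf (a i) (F i) T.
  by rewrite {1}/T; apply: eq_bigr => i _; exact: yh.
have TT := fix_unique _ F a T Ts G al0 TI TsI Tfix Tsfix.
by apply/matrixP => i jj; rewrite (ord1 jj) yh xE TT.
Qed.
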